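(* For every even integer $k\ge 0$ and every integer $d\ge k$, every $d$-regular graph contains a spanning subgraph in which every vertex has degree $k$ or $k-1$.
   Context: All graphs are finite and simple. A spanning subgraph of $H=(V,E)$ is a graph $(V,E')$ with $E'\subseteq E$. *)

(* Defs.v *)
From mathcomp Require Import all_boot.
Set Implicit Arguments. Unset Strict Implicit. Unset Printing Implicit Defensive.

Definition simple_graph (T : finType) (e : rel T) : Prop :=
  symmetric e /\ irreflexive e.

Definition deg (T : finType) (e : rel T) (x : T) : nat := #|[set y | e x y]|.

Definition regular (T : finType) (e : rel T) (d : nat) : Prop :=
  forall x, deg e x = d.

Definition spanning_subgraph (T : finType) (e' e : rel T) : Prop :=
  simple_graph e' /\ subrel e' e.

(* Main.v *)
Require Import Defs.
From mathcomp Require Import all_boot.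
Set Implicit Arguments. Unset Strict Implicit. Unset Printing Implicit Defensive.


Definition outd (V : finType) (O : rel V) (x : V) := #|[set y | O x y]|.
Definition orient (V : finType) (E O : rel V) :=
  (forall x y, E x y = O x y || O y x) /\ (forall x y, O x y -> ~~ O y x).

Lemma card_disjU (V : finType) (A B : {set V}) :
  (forall x, x \in A -> x \in B -> False) -> #|A :|: B| = #|A| + #|B|.
Proof.
move=> H; rewrite cardsU; have -> : A :&: B = set0.
  by apply/setP=> x; rewrite !inE; apply/negbTE/negP => /andP[]; exact: H.
by rewrite cards0 subn0.
Qed.

Lemma card_sum (V : finType) (S : {set V}) (P : pred V) :
  #|[set y in S | P y]| = \sum_(y in S) (P y : nat).
Proof.
rewrite -sum1_card big_mkcond [RHS]big_mkcond /=; apply: eq_bigr => y _.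
by rewrite inE; case: (y \in S); case: (P y).
Qed.

Lemma orient0 (V : finType) (E : rel V) :
  symmetric E -> irreflexive E -> exists O, orient E O.
Proof.
move=> Es Ei; exists (fun x y => E x y && (enum_rank x < enum_rank y)); split.
  move=> x y /=; rewrite [E y x]Es -andb_orr; case Exy: (E x y) => //=.
  case: (ltngtP (enum_rank x) (enum_rank y)) => // /val_inj /enum_rank_inj exy.
  by move: Exy; rewrite exy Ei.
by move=> x y /= /andP[_ h]; rewrite negb_and ltnNge ltnW ?orbT.
Qed.

Lemma deg_split (V : finType) (E O : rel V) x :
  orient E O -> deg E x = outd O x + #|[set y | O y x]|.
Proof.
move=> [HE HA]; rewrite /deg /outd -card_disjU.
  by apply: eq_card => y; rewrite !inE HE.
move=> y; rewrite !inE => h1 h2; by move: (HA _ _ h1); rewrite h2.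
Qed.

Lemma sum_orient_gen (V : finType) (E O : rel V) (S : {set V}) :
  orient E O ->
  \sum_(x in S) #|[set y in S | E x y]| = 2 * \sum_(x in S) #|[set y in S | O x y]|.
Proof.
move=> [HE HA].
rewrite (eq_bigr (fun x => \sum_(y in S) (O x y : nat) + \sum_(y in S) (O y x : nat))); last first.
  move=> x _; rewrite card_sum -big_split /=; apply: eq_bigr => y _.
  rewrite HE; case Oxy: (O x y); case Oyx: (O y x) => //.
  by move: (HA _ _ Oxy); rewrite Oyx.
rewrite big_split /= [X in _ + X]exchange_big /= mul2n -addnn.
by congr (_ + _); apply: eq_bigr => x _; rewrite card_sum.
Qed.

Lemma sum_orient (V : finType) (E O : rel V) (S : {set V}) :
  orient E O -> (forall x y, x \in S -> O x y -> y \in S) ->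
  \sum_(x in S) #|[set y in S | E x y]| = 2 * \sum_(x in S) outd O x.
Proof.
move=> HO Hc; rewrite (sum_orient_gen S HO); congr (2 * _).
apply: eq_bigr => x xS; rewrite /outd; apply: eq_card => y; rewrite !inE.
by case Oxy: (O x y); rewrite ?andbT ?andbF // (Hc x y).
Qed.

Lemma flip (V : finType) (E O : rel V) v w :
  orient E O -> connect O v w -> v != w ->
  exists O', orient E O' /\ (outd O' v).+1 = outd O v /\
    outd O' w = (outd O w).+1 /\
    forall u, u != v -> u != w -> outd O' u = outd O u.
Proof.
move=> [HE HA] /connectP [p0 Hp0 ->] {w}; case/shortenP: Hp0 => p Hp Up _ {p0}.
set s := v :: p; set w := last v p => vw.
have pn : p != [::] by move: vw; rewrite /w; case: (p) => //=; rewrite eqxx.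
have sz : size s = (size p).+1 by [].
pose F x y := [&& x \in s, (index x s).+1 < size s & y == nth v s (index x s).+1].
have FO : forall x y, F x y -> O x y.
  move=> x y /and3P[xs hi /eqP->]; move/pathP: Hp => /(_ v (index x s)).
  by rewrite -ltnS -sz => /(_ hi); rewrite nth_index.
have oF : forall u, #|[set y | F u y]| = (u \in s) && ((index u s).+1 < size s).
  move=> u; case h: (_ && _).
    have -> : [set y | F u y] = [set nth v s (index u s).+1].
      by apply/setP=> y; move/andP: h => [h1 h2]; rewrite !inE /F h1 h2.
    by rewrite cards1.
  have -> : [set y | F u y] = set0 by apply/setP=> y; rewrite !inE /F; case: (u \in s) h => //= ->.
  by rewrite cards0.
have iF : forall u, #|[set x | F x u]| = (u \in s) && (0 < index u s).
  move=> u; case h: (_ && _).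
    move/andP: h => [us ip].
    have iss : (index u s).-1 < size s.
      by apply: (leq_ltn_trans (leq_pred _)); rewrite index_mem.
    have -> : [set x | F x u] = [set nth v s (index u s).-1].
      apply/setP => x; rewrite !inE /F; apply/idP/idP.
        move/and3P=> [xs hi /eqP eu].
        by rewrite eu index_uniq //= nth_index.
      move/eqP->; rewrite mem_nth // index_uniq // prednK // index_mem us /=.
      by rewrite nth_index.
    by rewrite cards1.
  have -> : [set x | F x u] = set0.
    apply/setP=> x; rewrite !inE; apply/negbTE/negP.
    move/and3P=>[xs hi /eqP eu]; move: h; by rewrite eu mem_nth // index_uniq.
  by rewrite cards0.
pose O' x y := (O x y && ~~ F x y) || F y x.
have HO' : orient E O'.
  split=> x y; rewrite /O'; [rewrite HE|];
   move: (FO x y) (FO y x) (HA x y) (HA y x);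
   case: (O x y); case: (O y x); case: (F x y); case: (F y x) => //= H1 H2 H3 H4;
   by [ | move: (H1 isT) | move: (H2 isT) | move: (H3 isT) | move: (H4 isT)].
have oE : forall u, outd O' u = outd O u - #|[set y | F u y]| + #|[set x | F x u]|.
  move=> u; rewrite /outd -(setIidPr (_ : [set y | F u y] \subset [set y | O u y])).
    rewrite -cardsD -card_disjU.
      by apply: eq_card => y; rewrite !inE /O' andbC.
    move=> y; rewrite !inE => /andP[_ Ouy] Fyu; by move: (HA _ _ (FO _ _ Fyu)); rewrite Ouy.
  by apply/subsetP=> y; rewrite !inE; exact: FO.
have oFle : forall u, #|[set y | F u y]| <= outd O u.
  move=> u; apply: subset_leq_card; apply/subsetP=> y; rewrite !inE; exact: FO.
exists O'; split=> //; split.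
  move: (oFle v); rewrite oE oF iF mem_head /= eqxx ltnS lt0n size_eq0 pn ltnn /= addn0 => h.
  by rewrite subn1 prednK.
split.
  have ws : w \in s by rewrite /w mem_last.
  have iw : index w s = size p by exact: index_last.
  rewrite oE oF iF ws iw sz ltnn /= lt0n size_eq0 pn /= subn0 addn1.
  by [].
move=> u uv uw; rewrite oE oF iF; case us: (u \in s) => /=; last by rewrite subn0 addn0.
have i0 : 0 < index u s.
  rewrite lt0n; apply/negP=> /eqP h; move: uv; rewrite -(nth_index v us) h /=.
  by rewrite eqxx.
have i1 : (index u s).+1 < size s.
  rewrite sz ltnS ltn_neqAle -ltnS -sz index_mem us andbT.
  apply/negP=> /eqP h; move: uw; rewrite -(nth_index v us) h /w (last_nth v) /=.
  by rewrite eqxx.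
rewrite i0 i1 subn1 addn1 prednK // (leq_trans _ (oFle u)) // oF us i1.
by [].
Qed.

Lemma orient_bound (V : finType) (E : rel V) (b : V -> nat) :
  symmetric E -> irreflexive E ->
  (forall S : {set V}, \sum_(x in S) #|[set y in S | E x y]| <= 2 * \sum_(x in S) b x) ->
  exists O, orient E O /\ forall v, outd O v <= b v.
Proof.
move=> Es Ei Hs; have [O0 HO0] := orient0 Es Ei.
suff: forall n O, orient E O -> \sum_u (outd O u - b u) <= n ->
   exists O', orient E O' /\ forall v, outd O' v <= b v by apply; first exact: HO0.
elim=> [|n IH] O HO Hex.
  exists O; split=> // u; move: Hex; rewrite leqn0 sum_nat_eq0 => /forallP /(_ u) /=.
  by rewrite subn_eq0.
case: (boolP [forall u, outd O u <= b u]) => [/forallP H|]; first by exists O.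
rewrite negb_forall => /existsP [v]; rewrite -ltnNge => Hv.
set R := [set u | connect O v u].
have Rv : v \in R by rewrite inE connect0.
have [w Rw Hw] : exists2 w, w \in R & outd O w < b w.
  case: (boolP [exists w in R, outd O w < b w]) => [/exists_inP [w ? ?]|H].
    by exists w.
  exfalso; move: H; rewrite negb_exists_in => /forall_inP H.
  have cl : forall x y, x \in R -> O x y -> y \in R.
    move=> x y; rewrite !inE => vx Oxy; apply: connect_trans vx _; exact: connect1.
  have H1 : \sum_(x in R) outd O x <= \sum_(x in R) b x.
    by have := Hs R; rewrite (sum_orient HO cl) leq_pmul2l.
  have H2 : \sum_(x in R) b x < \sum_(x in R) outd O x.
    rewrite (bigD1 v) //= [X in _ < X](bigD1 v) //= -addSn leq_add //.
    by apply: leq_sum => x /andP[xR _]; rewrite leqNgt; exact: H.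
  by move: H2; rewrite ltnNge H1.
have vw : v != w by apply/eqP=> e; move: Hv; rewrite e ltnNge ltnW.
have cw : connect O v w by move: Rw; rewrite inE.
have [O' [HO' [E1 [E2 E3]]]] := flip HO cw vw.
apply: (IH O' HO'); rewrite -ltnS; apply: leq_trans Hex.
rewrite (bigD1 v) //= [X in _ <= X](bigD1 v) //= -addSn leq_add //.
  by rewrite -E1 subSn // -ltnS E1.
apply: leq_sum => u /= uv; case: (eqVneq u w) => [->|uw].
  by rewrite E2; move: Hw; rewrite -subn_eq0 => /eqP->.
by rewrite E3.
Qed.

Lemma sum_eq_le (V : finType) (f g : V -> nat) :
  (forall x, f x <= g x) -> \sum_x f x = \sum_x g x -> forall x, f x = g x.
Proof.
move=> H e x; apply/eqP; rewrite eqn_leq H /= leqNgt; apply/negP => lt.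
move: e; rewrite (bigD1 x) //= [X in _ = X](bigD1 x) //= => e.
have : f x + \sum_(i | i != x) f i < g x + \sum_(i | i != x) g i.
  by rewrite -addSn leq_add // leq_sum.
by rewrite e ltnn.
Qed.

Lemma sum_orient_full (V : finType) (E O : rel V) :
  orient E O -> \sum_x deg E x = 2 * \sum_x outd O x.
Proof.
move=> HO; have := sum_orient (S := [set: V]) HO (fun x y _ _ => in_setT y).
rewrite (eq_bigl _ _ (fun x => in_setT x)) [X in _ = 2 * X -> _](eq_bigl _ _ (fun x => in_setT x)).
move=> <-; apply: eq_bigr => x _; rewrite /deg; apply: eq_card => y; by rewrite !inE.
Qed.

Lemma sum_pair (V : finType) (f : V * bool -> nat) :
  \sum_p f p = \sum_x (f (x, true) + f (x, false)).
Proof.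
rewrite [RHS](eq_bigr (fun x => \sum_c f (x, c))); last by move=> x _; rewrite big_bool.
by rewrite pair_big; apply: eq_big => // [[x c]].
Qed.

Lemma petersen (V : finType) (E : rel V) (r j : nat) :
  symmetric E -> irreflexive E -> (forall x, deg E x = r.*2) -> j <= r ->
  exists H : rel V, spanning_subgraph H E /\ forall x, deg H x = j.*2.
Proof.
move=> Es Ei Hd jr.
have [O [HO Ob]] : exists O, orient E O /\ forall v, outd O v <= r.
  apply: (orient_bound (b := fun _ => r)) => // S.
  rewrite big_distrr /=; apply: leq_sum => x _; rewrite mul2n -(Hd x) /deg.
  by apply: subset_leq_card; apply/subsetP => y; rewrite !inE => /andP[].
have Oeq : forall x, outd O x = r.
  apply: (sum_eq_le (g := fun _ => r)) => //.
  apply/eqP; rewrite -(eqn_pmul2l (_ : 0 < 2)) // -(sum_orient_full HO) big_distrr /=.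
  by apply/eqP; apply: eq_bigr => x _; rewrite Hd mul2n.
have Ieq : forall x, #|[set y | O y x]| = r.
  by move=> x; apply/eqP; move: (deg_split x HO); rewrite Hd Oeq -addnn => /eqP; rewrite eqn_add2l eq_sym.
have [HE HA] := HO.
pose EB (p q : V * bool) := (p.2 && ~~ q.2 && O p.1 q.1) || (~~ p.2 && q.2 && O q.1 p.1).
pose OB (p q : V * bool) := p.2 && ~~ q.2 && O p.1 q.1.
have EBs : symmetric EB by move=> [x a] [y c]; rewrite /EB /=; case: a; case: c; rewrite /= ?orbF.
have EBi : irreflexive EB by move=> [x a]; rewrite /EB /=; case: a.
have HOB : orient EB OB.
  split; first by move=> [x a] [y c]; rewrite /EB /OB /=; case: a; case: c.
  by move=> [x a] [y c]; rewrite /OB /=; case: a; case: c.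
have sO1 : forall x, [set q | OB (x, true) q] = (fun y => (y, false)) @: [set y | O x y].
  move=> x; apply/setP => [[y c]]; rewrite !inE /OB /=; case: c => /=.
    by apply/esym/negbTE/imsetP => [[z _ []]].
  apply/idP/imsetP => [Oxy|[z]]; first by exists y; rewrite ?inE.
  by rewrite inE => ? [->].
have sO2 : forall x, [set q | OB (x, false) q] = set0.
  by move=> x; apply/setP => q; rewrite !inE.
have sI1 : forall y, [set p | OB p (y, false)] = (fun x => (x, true)) @: [set x | O x y].
  move=> y; apply/setP => [[x c]]; rewrite !inE /OB /=; case: c => /=.
    apply/idP/imsetP => [Oxy|[z]]; first by exists x; rewrite ?inE.
    by rewrite inE => ? [->].
  by apply/esym/negbTE/imsetP => [[z _ []]].
have sI2 : forall y, [set p | OB p (y, true)] = set0.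
  by move=> y; apply/setP => [[x c]]; rewrite !inE /OB /= andbF.
have inj1 : forall c : bool, injective (fun y : V => (y, c)) by move=> c y1 y2 [].
pose b (p : V * bool) := if p.2 then j else r - j.
have [O2 [HO2 O2b]] : exists O2, orient EB O2 /\ forall v, outd O2 v <= b v.
  apply: orient_bound => // S; rewrite (sum_orient_gen S HOB) leq_pmul2l //.
  set X := \sum_(p in S) _.
  have X1 : X <= r * \sum_(p in S) (p.2 : nat).
    rewrite big_distrr /=; apply: leq_sum => [[x c]] _ /=.
    apply: leq_trans (_ : #|[set q | OB (x, c) q]| <= _).
      by apply: subset_leq_card; apply/subsetP => q; rewrite !inE => /andP[].
    by case: c; rewrite ?sO1 ?sO2 ?cards0 /= ?muln1 // card_imset //; apply: eq_leq; exact: Oeq.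
  have X2 : X <= r * \sum_(p in S) (~~ p.2 : nat).
    rewrite /X (eq_bigr (fun p => \sum_(q in S) (OB p q : nat))); last by move=> p _; rewrite card_sum.
    rewrite exchange_big /= big_distrr /=; apply: leq_sum => [[y c]] _ /=.
    rewrite -card_sum.
    apply: leq_trans (_ : #|[set p | OB p (y, c)]| <= _).
      by apply: subset_leq_card; apply/subsetP => q; rewrite !inE => /andP[].
    by case: c; rewrite ?sI1 ?sI2 ?card_imset ?cards0 ?Ieq ?muln1 ?muln0.
  have -> : \sum_(p in S) b p = j * \sum_(p in S) (p.2 : nat) + (r - j) * \sum_(p in S) (~~ p.2 : nat).
    rewrite !big_distrr -big_split /=; apply: eq_bigr => [[x c]] _ /=.
    by case: c; rewrite /b /= ?muln1 ?muln0 ?addn0.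
  set cL := \sum_(p in S) _ in X1 *; set cR := \sum_(p in S) _ in X2 *.
  case: (leqP cL cR) => h.
    apply: leq_trans X1 _; rewrite -{1}(subnKC jr) mulnDl leq_add2l.
    exact: leq_mul.
  apply: leq_trans X2 _; rewrite -{1}(subnKC jr) mulnDl leq_add2r.
  exact: leq_mul (ltnW h).
have O2eq : forall p, outd O2 p = b p.
  apply: sum_eq_le => //.
  apply/eqP; rewrite -(eqn_pmul2l (_ : 0 < 2)) // -(sum_orient_full HO2).
  rewrite (sum_orient_full HOB) eqn_pmul2l // !sum_pair /b /=; apply/eqP.
  apply: eq_bigr => x _; rewrite /outd sO1 sO2 card_imset // cards0 -/(outd O x) Oeq addn0 subnKC //.
have [HE2 HA2] := HO2.
have I2 : forall y, #|[set p | O2 p (y, false)]| = j.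
  move=> y; apply/eqP; move: (deg_split (y, false) HO2) (deg_split (y, false) HOB).
  rewrite O2eq /outd sO2 sI1 card_imset // cards0 Ieq /b /= => ->.
  by rewrite add0n -{2}(subnK jr) => /eqP; rewrite eqn_add2l.
have O2E : forall p q, O2 p q -> EB p q by move=> p q h; rewrite HE2 h.
have s1 : forall x, [set q | O2 (x, true) q] = (fun y => (y, false)) @: [set y | O2 (x, true) (y, false)].
  move=> x; apply/setP => [[y c]]; rewrite inE; apply/idP/imsetP.
    move=> h; exists y; rewrite ?inE; case: c h => // h; by move: (O2E _ _ h); rewrite /EB /=.
  by move=> [z]; rewrite inE => h [-> ->].
have s2 : forall x, [set p | O2 p (x, false)] = (fun y => (y, true)) @: [set y | O2 (y, true) (x, false)].
  move=> x; apply/setP => [[y c]]; rewrite inE; apply/idP/imsetP.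
    move=> h; exists y; rewrite ?inE; case: c h => // h; by move: (O2E _ _ h); rewrite /EB /=.
  by move=> [z]; rewrite inE => h [-> ->].
pose H x y := O2 (x, true) (y, false) || O2 (y, true) (x, false).
have HsubO : forall x y, H x y -> O x y || O y x.
  move=> x y /orP [] /O2E; rewrite /EB /= ?orbF => ->; by rewrite ?orbT.
exists H; split.
  split; [split|].
  - by move=> x y; rewrite /H orbC.
  - by move=> x; apply/negbTE/negP => /HsubO; rewrite -HE Ei.
  - by move=> x y /HsubO; rewrite -HE.
move=> x; rewrite /deg -addnn.
have -> : [set y | H x y] = [set y | O2 (x, true) (y, false)] :|: [set y | O2 (y, true) (x, false)].
  by apply/setP => y; rewrite !inE.
rewrite card_disjU.
  move: (O2eq (x, true)) (I2 x); rewrite /outd s1 s2 !card_imset // => -> ->.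
  by [].
move=> y; rewrite !inE => /O2E h1 /O2E h2; move: h1 h2; rewrite /EB /= ?orbF => h1 h2.
by move: (HA _ _ h1); rewrite h2.
Qed.

Lemma mem_imset_pair (T : finType) (A : {set T}) (a : bool) y c :
  ((y, c) \in (fun z => (z, a)) @: A) = (c == a) && (y \in A).
Proof.
apply/imsetP/andP => [[z zA [-> ->]]|[/eqP -> yA]]; first by rewrite eqxx.
by exists y.
Qed.

Unset Implicit Arguments.
Theorem lemma2p3 (k d : nat) (T : finType) (e : rel T) :
  ~~ odd k -> k <= d -> simple_graph e -> regular e d ->
  exists e' : rel T, spanning_subgraph e' e /\
    forall x : T, deg e' x = k \/ (deg e' x).+1 = k.
Proof.
move=> ek kd [es ei] reg.
have kj : k = (k./2).*2 by rewrite -{1}(odd_double_half k) (negbTE ek) add0n.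
set j := k./2 in kj.
case od: (odd d); last first.
  have dr : d = (d./2).*2 by rewrite -{1}(odd_double_half d) od add0n.
  set r := d./2 in dr.
  have jr : j <= r by rewrite -leq_double -kj -dr.
  have [H [HS Hd]] := petersen es ei (fun x => etrans (reg x) dr) jr.
  by exists H; split => // x; left; rewrite Hd -kj.
have dr : d = (d./2).*2.+1 by rewrite -{1}(odd_double_half d) od.
set r := d./2 in dr.
have jr : j <= r.+1.
  have : j.*2 < (r.+1).*2 by rewrite doubleS ltnS -kj -dr.
  by rewrite ltn_double => /ltnW.
pose E2 (p q : T * bool) := ((p.2 == q.2) && e p.1 q.1) || ((p.1 == q.1) && (p.2 != q.2)).
have E2s : symmetric E2.
  by move=> [x a] [y c]; rewrite /E2 /= [c == a]eq_sym [y == x]eq_sym es.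
have E2i : irreflexive E2 by move=> [x a]; rewrite /E2 /= !eqxx ei.
have E2d : forall p, deg E2 p = (r.+1).*2.
  move=> [x a]; rewrite /deg.
  have -> : [set q | E2 (x, a) q] = ((fun y => (y, a)) @: [set y | e x y]) :|: [set (x, ~~ a)].
    apply/setP => [[y c]]; rewrite !inE mem_imset_pair inE xpair_eqE /E2 /=.
    case: (eqVneq x y) => [<-|xy]; first by rewrite ei; case: a; case: c.
    by case: a; case: c; rewrite /= ?andbF ?orbF // eq_sym (negbTE xy).
  rewrite card_disjU.
    by rewrite card_imset; [rewrite cards1 -/(deg e x) reg dr addn1 doubleS | move=> y1 y2 []].
  by move=> [y c]; rewrite mem_imset_pair inE => /andP[/eqP -> _]; rewrite inE xpair_eqE; case: a; rewrite ?andbF.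
have [H2 [[[H2s H2i] H2E] H2d]] := petersen E2s E2i E2d jr.
exists (fun x y => H2 (x, true) (y, true)); split.
  split; [split|].
  - by move=> x y; rewrite H2s.
  - by move=> x; rewrite H2i.
  - by move=> x y /H2E; rewrite /E2 /= andbF orbF.
move=> x.
set A := [set y | H2 (x, true) (y, true)].
set B := [set q | H2 (x, true) q & q == (x, false)].
have eq1 : [set q | H2 (x, true) q] = ((fun y => (y, true)) @: A) :|: B.
  apply/setP => [[y c]]; rewrite !inE mem_imset_pair inE xpair_eqE.
  case: c; rewrite /= ?andbF ?orbF ?andbT //.
  apply/idP/idP => [h|/andP[] //]; rewrite h /=.
  by move: (H2E _ _ h); rewrite /E2 /= andbT eq_sym.
have := H2d (x, true); rewrite /deg eq1 card_disjU; last first.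
  by move=> [y c]; rewrite mem_imset_pair inE => /andP[/eqP -> _]; rewrite inE xpair_eqE andbF andbF.
rewrite card_imset; last by move=> y1 y2 [].
have : #|B| <= 1.
  rewrite -(cards1 (x, false)); apply: subset_leq_card; apply/subsetP => q.
  by rewrite !inE => /andP[].
rewrite -kj -/(deg _ x); case: #|B| => [|[|//]] _ <-.
  by left; rewrite addn0.
by right; rewrite addn1.
Qed.
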